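(* Let $m,n\in\mathbb{N}$ with $n\le m\le 2n$. Let $L>0$, $C>1$, $\Gamma\subseteq\mathbb{Z}_n$, $r=20C(\log(|\Gamma|/2)+1)$, and $\tau<\frac{L}{20}\cdot\frac{1}{3+2\log(n)}$. Let $f:\mathbb{Z}_n\to\mathbb{C}$ and suppose that $|\alpha-\alpha'|_n>r$ for all distinct $\alpha,\alpha'\in\Gamma$, that $L\le|\widehat f(\alpha)|\le CL$ for all $\alpha\in\Gamma$, and that $|\widehat f(\alpha)|\le\tau$ for all $\alpha\notin\Gamma$. Then $|\widehat{\widetilde f}(\lfloor\frac mn\alpha\rceil)|\ge\frac15L$ for all $\alpha\in\Gamma$.
   Context: $\mathbb{Z}_n=\{0,\dots,n-1\}$ with addition mod $n$; elements are treated as these integer representatives. For $h:\mathbb{Z}_n\to\mathbb{C}$, $\widehat h(\alpha)=\frac1n\sum_{x\in\mathbb{Z}_n}h(x)\exp(-2\pi i\alpha x/n)$ (analogously on $\mathbb{Z}_m$). $\widetilde f:\mathbb{Z}_m\to\mathbb{C}$ is $\widetilde f(x)=f(x)$ for $0\le x<\min(n,m)$ and $0$ otherwise. $\lfloor x\rceil$ is the integer nearest to $x$, taken in $\mathbb{Z}_m$. For $k\in\mathbb{N}$, $x\in\mathbb{R}$: $|x|_k=\min\{|x-kz|:z\in\mathbb{Z}\}$. $\log$ is the natural logarithm. *)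

(* Defs.v *)
From Stdlib Require Import Reals Lra Lia ZArith List.
From Coquelicot Require Import Coquelicot.
Open Scope R_scope.

Definition cexpi (t : R) : C := (cos t, sin t).

Fixpoint csum (k : nat) (g : nat -> C) : C :=
  match k with
  | O => 0%C
  | S k' => (csum k' g + g k')%C
  end.

(* Fourier coefficient on Z_n (elements = representatives 0..n-1):
   hat h (alpha) = 1/n * sum_{x in Z_n} h x * exp(-2 pi i alpha x / n) *)
Definition fhat (n : nat) (h : nat -> C) (alpha : nat) : C :=
  (RtoC (/ INR n) *
   csum n (fun x => h x * cexpi (- 2 * PI * INR alpha * INR x / INR n)))%C.

Definition ftilde (n m : nat) (f : nat -> C) (x : nat) : C :=
  if (x <? Nat.min n m)%nat then f x else 0%C.

(* nearest integer to x (ties rounded up), taken in Z_m *)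
Definition round_mod (m : nat) (x : R) : nat :=
  (Z.to_nat (Int_part (x + / 2)) mod m)%nat.

Definition absk (k : nat) (x : R) (d : R) : Prop :=
  (exists z : Z, d = Rabs (x - INR k * IZR z)) /\
  (forall z : Z, d <= Rabs (x - INR k * IZR z)).

(* Main.v *)
Require Import Defs.
From Stdlib Require Import Reals Lra Lia List ZArith.
From Coquelicot Require Import Coquelicot.
Open Scope R_scope.

Lemma cexpi_add a b : (cexpi a * cexpi b)%C = cexpi (a + b).
Proof. unfold cexpi, Cmult; simpl. rewrite cos_plus, sin_plus. f_equal; ring. Qed.

Lemma cexpi_0 : cexpi 0 = 1%C.
Proof. unfold cexpi. rewrite cos_0, sin_0. reflexivity. Qed.

Lemma cexpi_period t k : cexpi (t + 2 * INR k * PI) = cexpi t.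
Proof. unfold cexpi. rewrite cos_period, sin_period. reflexivity. Qed.

Lemma cexpi_period' t k : cexpi (t - 2 * PI * INR k) = cexpi t.
Proof. rewrite <- (cexpi_period (t - 2 * PI * INR k) k). f_equal. ring. Qed.

Lemma Cmod_cexpi t : Cmod (cexpi t) = 1.
Proof. unfold Cmod, cexpi; simpl. pose proof (sin2_cos2 t). unfold Rsqr in H.
  replace (cos t * (cos t * 1) + sin t * (sin t * 1)) with 1 by lra. apply sqrt_1. Qed.

Lemma Cmod_cexpi_m1 t : Cmod (cexpi t - 1) = 2 * Rabs (sin (t/2)).
Proof.
  unfold Cmod, cexpi; simpl.
  set (u := t/2). assert (Ht : t = 2 * u) by (unfold u; field). rewrite Ht.
  rewrite cos_2a_sin, sin_2a.
  pose proof (sin2_cos2 u) as H. unfold Rsqr in H.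
  match goal with |- sqrt ?a = _ => replace a with (Rsqr (2 * sin u)) by (unfold Rsqr; nra) end.
  rewrite sqrt_Rsqr_abs, Rabs_mult, (Rabs_right 2) by lra. reflexivity.
Qed.

Fixpoint rsum (k : nat) (g : nat -> R) : R :=
  match k with O => 0 | S k' => rsum k' g + g k' end.

Lemma csum_ext k g h : (forall x, (x < k)%nat -> g x = h x) -> csum k g = csum k h.
Proof. induction k; simpl; intros H; auto. rewrite IHk by (intros; apply H; lia). rewrite H by lia. auto. Qed.

Lemma rsum_ext k g h : (forall x, (x < k)%nat -> g x = h x) -> rsum k g = rsum k h.
Proof. induction k; simpl; intros H; auto. rewrite IHk by (intros; apply H; lia). rewrite H by lia. auto. Qed.

Lemma rsum_le k g h : (forall x, (x < k)%nat -> g x <= h x) -> rsum k g <= rsum k h.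
Proof. induction k; simpl; intros H; [lra|]. pose proof (H k ltac:(lia)). pose proof (IHk ltac:(intros; apply H; lia)). lra. Qed.

Lemma rsum_plus k g h : rsum k (fun x => g x + h x) = rsum k g + rsum k h.
Proof. induction k; simpl; [lra|]. rewrite IHk. ring. Qed.

Lemma rsum_scal k c g : rsum k (fun x => c * g x) = c * rsum k g.
Proof. induction k; simpl; [lra|]. rewrite IHk. ring. Qed.

Lemma csum_plus k g h : csum k (fun x => g x + h x)%C = (csum k g + csum k h)%C.
Proof. induction k; simpl. ring. rewrite IHk. ring. Qed.

Lemma csum_scal k c g : csum k (fun x => c * g x)%C = (c * csum k g)%C.
Proof. induction k; simpl. ring. rewrite IHk. ring. Qed.

Lemma csum_zero k : csum k (fun _ => 0%C) = 0%C.
Proof. induction k; simpl; auto. rewrite IHk. ring. Qed.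

Lemma csum_swap k p (h : nat -> nat -> C) :
  csum k (fun x => csum p (fun y => h x y)) = csum p (fun y => csum k (fun x => h x y)).
Proof.
  induction k; simpl. symmetry; apply csum_zero.
  rewrite IHk. rewrite <- csum_plus. reflexivity.
Qed.

Lemma csum_delta k a g : (a < k)%nat ->
  csum k (fun x => if Nat.eqb x a then g x else 0%C) = g a.
Proof.
  induction k; intros H; [lia|]. simpl.
  destruct (Nat.eqb_spec k a).
  - subst. rewrite (csum_ext _ _ (fun _ => 0%C)). rewrite csum_zero. ring.
    intros x Hx. destruct (Nat.eqb_spec x a); [lia|auto].
  - rewrite IHk by lia. ring.
Qed.

Lemma Cmod_csum k g : Cmod (csum k g) <= rsum k (fun x => Cmod (g x)).
Proof.
  induction k; simpl. rewrite Cmod_0. lra.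
  eapply Rle_trans. apply Cmod_triangle. lra.
Qed.

Lemma csum_split k a g : (a < k)%nat ->
  csum k g = (g a + csum k (fun x => if Nat.eqb x a then 0%C else g x))%C.
Proof.
  intros H.
  transitivity (csum k (fun x => (if Nat.eqb x a then g x else 0%C) + (if Nat.eqb x a then 0%C else g x))%C).
  apply csum_ext. intros x _. destruct (Nat.eqb x a); ring.
  rewrite csum_plus, csum_delta by auto. reflexivity.
Qed.

Lemma csum_app k j g : csum (k + j) g = (csum k g + csum j (fun x => g (k + x)%nat))%C.
Proof. induction j; simpl. rewrite Nat.add_0_r. ring. rewrite Nat.add_succ_r. simpl. rewrite IHj. ring. Qed.

Definition G (n : nat) (d : R) : C := csum n (fun x => cexpi (2 * PI * d * INR x)).

Lemma geom n d : ((cexpi (2*PI*d) - 1) * G n d = cexpi (2*PI*d*INR n) - 1)%C.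
Proof.
  unfold G. induction n; simpl.
  - rewrite Rmult_0_r, cexpi_0. ring.
  - rewrite Cmult_plus_distr_l, IHn.
    replace ((cexpi (2 * PI * d) - 1) * cexpi (2 * PI * d * INR n))%C
      with (cexpi (2 * PI * d) * cexpi (2 * PI * d * INR n) - cexpi (2 * PI * d * INR n))%C by ring.
    rewrite cexpi_add. destruct n.
    + simpl. replace (2 * PI * d + 2 * PI * d * 0) with (2 * PI * d * 1) by ring. ring.
    + replace (2 * PI * d + 2 * PI * d * INR (S n)) with (2 * PI * d * (INR (S n) + 1)) by ring. ring.
Qed.

Lemma G_mod n d : Cmod (G n d) * Rabs (sin (PI * d)) = Rabs (sin (PI * d * INR n)).
Proof.
  pose proof (f_equal Cmod (geom n d)) as H.
  rewrite Cmod_mult, !Cmod_cexpi_m1 in H.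
  replace (2 * PI * d / 2) with (PI * d) in H by field.
  replace (2 * PI * d * INR n / 2) with (PI * d * INR n) in H by field. lra.
Qed.

Lemma G_shift n d j : G n (d - INR j) = G n d.
Proof.
  unfold G. apply csum_ext. intros x _.
  replace (2 * PI * (d - INR j) * INR x) with (2 * PI * d * INR x - 2 * PI * INR (j * x)).
  apply cexpi_period'. rewrite mult_INR. ring.
Qed.

Lemma G_zero n : G n 0 = RtoC (INR n).
Proof.
  unfold G. induction n; simpl. reflexivity.
  rewrite IHn. rewrite Rmult_0_r, Rmult_0_l, cexpi_0. destruct n. simpl. 
  unfold RtoC, Cplus; simpl. f_equal; ring.
  unfold RtoC, Cplus; simpl. f_equal; ring.
Qed.

Lemma sin_int_pi (a b : nat) : sin (PI * (INR a - INR b)) = 0.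
Proof.
  apply sin_eq_0_1. exists (Z.of_nat a - Z.of_nat b)%Z.
  rewrite minus_IZR, <- !INR_IZR_INZ. ring.
Qed.

Lemma G_orth n x y : (x < n)%nat -> (y < n)%nat -> x <> y ->
  G n ((INR x - INR y) / INR n) = 0%C.
Proof.
  intros Hx Hy Hxy.
  assert (Hn : 0 < INR n) by (apply lt_0_INR; lia).
  pose proof (G_mod n ((INR x - INR y) / INR n)) as H.
  replace (PI * ((INR x - INR y) / INR n) * INR n) with (PI * (INR x - INR y)) in H by (field; lra).
  rewrite sin_int_pi, Rabs_R0 in H.
  assert (Hs : sin (PI * ((INR x - INR y) / INR n)) <> 0).
  { assert (INR x < INR n) by (apply lt_INR; lia).
    assert (INR y < INR n) by (apply lt_INR; lia).
    assert (0 <= INR x) by apply pos_INR. assert (0 <= INR y) by apply pos_INR.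
    destruct (Nat.lt_ge_cases y x) as [Hl|Hl].
    - apply Rgt_not_eq. apply lt_INR in Hl. apply sin_gt_0.
      apply Rmult_lt_0_compat. apply PI_RGT_0. apply Rdiv_lt_0_compat; lra.
      rewrite <- (Rmult_1_r PI) at 2. apply Rmult_lt_compat_l. apply PI_RGT_0.
      apply Rmult_lt_reg_r with (INR n); auto. unfold Rdiv. rewrite Rmult_assoc, Rinv_l; lra.
    - assert (Hl' : (x < y)%nat) by lia. apply lt_INR in Hl'.
      apply Rlt_not_eq. apply sin_lt_0_var.
      + assert (-1 < (INR x - INR y) / INR n).
        { apply Rmult_lt_reg_r with (INR n); auto. unfold Rdiv. rewrite Rmult_assoc, Rinv_l; lra. }
        pose proof PI_RGT_0. nra.
      + assert ((INR x - INR y) / INR n < 0).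
        { apply Rmult_lt_reg_r with (INR n); auto. unfold Rdiv. rewrite Rmult_assoc, Rinv_l; lra. }
        pose proof PI_RGT_0. nra. }
  apply Cmod_eq_0. apply Rabs_no_R0 in Hs. apply Rmult_integral in H. destruct H; tauto.
Qed.

Lemma inversion n f x : (x < n)%nat ->
  f x = csum n (fun g => fhat n f g * cexpi (2 * PI * INR g * INR x / INR n))%C.
Proof.
  intros Hx. assert (Hn : 0 < INR n) by (apply lt_0_INR; lia).
  unfold fhat.
  transitivity (RtoC (/ INR n)%R * csum n (fun y => f y * G n ((INR x - INR y) / INR n)))%C.
  - rewrite (csum_ext n _ (fun y => if Nat.eqb y x then (f y * RtoC (INR n))%C else 0%C)).
    + rewrite csum_delta by auto. 
      rewrite Cmult_comm, <- Cmult_assoc.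
      rewrite <- RtoC_mult, Rinv_r by lra. rewrite Cmult_1_r. reflexivity.
    + intros y Hy. destruct (Nat.eqb_spec y x).
      * subst. replace ((INR x - INR x) / INR n) with 0 by (field; lra). rewrite G_zero. auto.
      * rewrite G_orth by auto. ring.
  - transitivity (RtoC (/ INR n)%R * csum n (fun g => csum n (fun y => f y * cexpi (- 2 * PI * INR g * INR y / INR n) * cexpi (2 * PI * INR g * INR x / INR n))))%C.
    + f_equal. rewrite csum_swap. apply csum_ext. intros y Hy.
      unfold G. rewrite <- csum_scal. apply csum_ext. intros g Hg.
      rewrite <- Cmult_assoc, cexpi_add. f_equal. f_equal. field. lra.
    + rewrite <- csum_scal. apply csum_ext. intros g Hg.
      rewrite <- Cmult_assoc. f_equal.
      rewrite Cmult_comm. rewrite <- csum_scal. apply csum_ext. intros y Hy. ring.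
Qed.

Lemma ghat_expand n m f k : (1 <= n)%nat -> (n <= m)%nat ->
  fhat m (ftilde n m f) (k mod m) =
  csum n (fun g => fhat n f g * (RtoC (/ INR m)%R * G n (INR g / INR n - INR k / INR m)))%C.
Proof.
  intros Hn1 Hnm.
  assert (Hn : 0 < INR n) by (apply lt_0_INR; lia).
  assert (Hm : 0 < INR m) by (apply lt_0_INR; lia).
  unfold fhat at 1.
  replace (csum m _) with (csum (n + (m - n)) (fun x => ftilde n m f x * cexpi (-2 * PI * INR (k mod m) * INR x / INR m)))%C by (f_equal; lia). rewrite csum_app.
  rewrite (csum_ext (m - n) _ (fun _ => 0%C)).
  2:{ intros x Hx. unfold ftilde. replace (Nat.min n m) with n by lia.
      destruct (Nat.ltb_spec (n + x) n); [lia|]. ring. }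
  rewrite csum_zero, Cplus_0_r.
  rewrite (csum_ext n _ (fun x => csum n (fun g => fhat n f g * cexpi (2 * PI * INR g * INR x / INR n)) * cexpi (- 2 * PI * INR k * INR x / INR m)))%C.
  2:{ intros x Hx. unfold ftilde. replace (Nat.min n m) with n by lia.
      destruct (Nat.ltb_spec x n); [|lia].
      rewrite <- inversion by auto. f_equal.
      pose proof (Nat.div_mod k m ltac:(lia)) as Hk.
      replace (- 2 * PI * INR k * INR x / INR m) with (- 2 * PI * INR (k mod m) * INR x / INR m - 2 * PI * INR (k / m * x)).
      symmetry. apply cexpi_period'.
      rewrite Hk at 3. rewrite plus_INR, !mult_INR. field. lra. }
  rewrite <- csum_scal.
  rewrite (csum_ext n _ (fun x => csum n (fun g => RtoC (/ INR m)%R * (fhat n f g * cexpi (2 * PI * (INR g / INR n - INR k / INR m) * INR x))))%C).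
  2:{ intros x Hx. rewrite (Cmult_comm (csum _ _)). rewrite <- csum_scal. rewrite <- csum_scal. apply csum_ext.
      intros g Hg. rewrite (Cmult_comm (cexpi _)). rewrite <- (Cmult_assoc (fhat n f g)), cexpi_add.
      replace (2 * PI * INR g * INR x / INR n + -2 * PI * INR k * INR x / INR m) with
        (2 * PI * (INR g / INR n - INR k / INR m) * INR x) by (field; lra). ring. }
  rewrite csum_swap. apply csum_ext. intros g Hg.
  unfold G. rewrite <- !csum_scal. apply csum_ext. intros x Hx. ring.
Qed.

Lemma PI_ub : PI <= 3.25.
Proof. destruct (PI_ineq 5) as [_ H]. unfold tg_alt, PI_tg in H. simpl in H. lra. Qed.
Lemma PI_lb : 3 <= PI.
Proof. destruct (PI_ineq 3) as [H _]. unfold tg_alt, PI_tg in H. simpl in H. lra. Qed.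

Lemma sin_le_x x : 0 <= x -> sin x <= x.
Proof.
  intros H. destruct (Rle_lt_dec x PI) as [Hp|Hp].
  - destruct (sin_bound x 0 H Hp) as [_ Hu]. unfold sin_approx, sin_term in Hu. simpl in Hu.
    pose proof PI_ub. assert (x*x <= 11) by nra.
    assert (0 <= x * x * x) by (apply Rmult_le_pos; [apply Rmult_le_pos|]; lra).
    nra.
  - pose proof (SIN_bound x). pose proof PI_lb. lra.
Qed.

Lemma sin_ge_cubic x : 0 <= x -> x <= PI -> x - x*x*x/6 <= sin x.
Proof.
  intros H Hp. destruct (sin_bound x 0 H Hp) as [Hl _]. unfold sin_approx, sin_term in Hl. simpl in Hl.
  pose proof PI_ub. assert (x*x <= 11) by nra.
  assert (0 <= x * x * x) by (apply Rmult_le_pos; [apply Rmult_le_pos|]; lra).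
  nra.
Qed.

Definition lsum (l : list nat) (g : nat -> R) : R := fold_right (fun x acc => g x + acc) 0 l.

Lemma lsum_app l1 l2 g : lsum (l1 ++ l2) g = lsum l1 g + lsum l2 g.
Proof. induction l1; simpl; [lra|]. rewrite IHl1. ring. Qed.

Lemma lsum_cons a l g : lsum (a :: l) g = g a + lsum l g.
Proof. reflexivity. Qed.

Lemma lsum_le l g h : (forall x, In x l -> g x <= h x) -> lsum l g <= lsum l h.
Proof. induction l; simpl; intros H; [lra|]. pose proof (H a (or_introl eq_refl)).
  pose proof (IHl (fun x Hx => H x (or_intror Hx))). lra. Qed.

Lemma lsum_nonneg l g : (forall x, In x l -> 0 <= g x) -> 0 <= lsum l g.
Proof. induction l; simpl; intros H; [lra|]. pose proof (H a (or_introl eq_refl)).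
  pose proof (IHl (fun x Hx => H x (or_intror Hx))). lra. Qed.

Lemma lsum_scal l c g : lsum l (fun x => c * g x) = c * lsum l g.
Proof. induction l; simpl; [ring|]. rewrite IHl. ring. Qed.

Lemma lsum_split p l g : lsum l g = lsum (filter p l) g + lsum (filter (fun x => negb (p x)) l) g.
Proof. induction l; simpl; [lra|]. destruct (p a); simpl; rewrite IHl; ring. Qed.

Fixpoint harm (k : nat) : R := match k with O => 0 | S k' => harm k' + 1 / INR (S k') end.

Lemma harm_mono k j : (k <= j)%nat -> harm k <= harm j.
Proof.
  intros H. induction H as [|j H IH]; [lra|]. cbn [harm]. assert (0 < INR (S j)) by (apply lt_0_INR; lia).
  assert (0 < 1 / INR (S j)) by (apply Rdiv_lt_0_compat; lra). lra.
Qed.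

Lemma ln_le_sub1 y : 0 < y -> ln y <= y - 1.
Proof.
  intros Hy. destruct (Req_dec y 1) as [->|Hne]. rewrite ln_1. lra.
  pose proof (exp_ineq1 (y - 1) ltac:(lra)).
  rewrite <- (ln_exp (y - 1)). left. apply ln_increasing; lra.
Qed.

Lemma harm_ln k : (1 <= k)%nat -> harm k <= 1 + ln (INR k).
Proof.
  induction k; intros Hk; [lia|]. destruct k.
  - simpl. rewrite ln_1. lra.
  - change (harm (S (S k))) with (harm (S k) + 1 / INR (S (S k))). specialize (IHk ltac:(lia)).
    rewrite !S_INR. rewrite S_INR in IHk. pose proof (pos_INR k).
    pose proof (ln_le_sub1 ((INR k + 1) / (INR k + 1 + 1)) ltac:(apply Rdiv_lt_0_compat; lra)) as Hl.
    unfold Rdiv in Hl. rewrite ln_mult, ln_Rinv in Hl by (try apply Rinv_0_lt_compat; lra).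
    replace ((INR k + 1) * / (INR k + 1 + 1) - 1) with (- (1 / (INR k + 1 + 1))) in Hl by (field; lra).
    lra.
Qed.

Lemma exists_max (l : list nat) (w : nat -> R) : l <> nil ->
  exists M, In M l /\ forall x, In x l -> w x <= w M.
Proof.
  induction l as [|a l IH]; intros Hne; [congruence|].
  destruct l as [|b l].
  - exists a. split; [left; auto|]. intros x [->|[]]. lra.
  - destruct (IH ltac:(discriminate)) as [M [HM HMx]].
    destruct (Rle_lt_dec (w a) (w M)).
    + exists M. split; [right; auto|]. intros x [<-|Hx]; auto.
    + exists a. split; [left; auto|]. intros x [<-|Hx]. lra. pose proof (HMx x Hx). lra.
Qed.

Lemma harm_sep_aux (w : nat -> R) r : 0 < r -> forall k l, length l = k -> NoDup l ->
  (forall x, In x l -> r <= w x) ->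
  (forall x y, In x l -> In y l -> x <> y -> r <= Rabs (w x - w y)) ->
  lsum l (fun x => 1 / w x) <= harm k / r /\
  (forall x, In x l -> (forall y, In y l -> w y <= w x) -> INR k * r <= w x).
Proof.
  intros Hr k. induction k; intros l Hlen Hnd Hge Hsep.
  - destruct l; [|discriminate]. simpl. split. unfold Rdiv; lra. intros x [].
  - destruct l as [|z l0]; [discriminate|].
    destruct (exists_max (z :: l0) w ltac:(discriminate)) as [M [HM HMx]].
    destruct (in_split M (z :: l0) HM) as [l1 [l2 E]].
    rewrite E in Hnd, Hlen.
    assert (Hl' : forall x, In x (l1 ++ l2) -> In x (z :: l0)).
    { intros x Hx. rewrite E. apply in_app_or in Hx. apply in_or_app. destruct Hx; [left|right; right]; auto. }
    assert (Hlen' : length (l1 ++ l2) = k).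
    { rewrite length_app in *. simpl in Hlen. lia. }
    destruct (IHk (l1 ++ l2) Hlen' (NoDup_remove_1 _ _ _ Hnd)
      ltac:(intros; apply Hge; auto) ltac:(intros; apply Hsep; auto)) as [IHs IHm].
    pose proof (NoDup_remove_2 _ _ _ Hnd) as HMn.
    assert (HwM : INR (S k) * r <= w M).
    { rewrite S_INR. destruct (l1 ++ l2) as [|y ly] eqn:El.
      - simpl in Hlen'. subst k. simpl. pose proof (Hge M HM). lra.
      - destruct (exists_max (y :: ly) w ltac:(discriminate)) as [M' [HM' HM'x]].
        pose proof (IHm M' HM' HM'x).
        assert (M' <> M) by (intro; subst; auto).
        assert (In M' (z :: l0)) by (apply Hl'; auto).
        pose proof (Hsep M M' HM H1 ltac:(auto)).
        pose proof (HMx M' H1).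
        rewrite Rabs_right in H2 by lra. lra. }
    split.
    + rewrite E, lsum_app, lsum_cons. rewrite lsum_app in IHs.
      change (harm (S k)) with (harm k + 1 / INR (S k)).
      assert (0 < INR (S k)) by (apply lt_0_INR; lia).
      assert (1 / w M <= 1 / INR (S k) / r).
      { unfold Rdiv. rewrite Rmult_assoc, <- Rinv_mult. rewrite !Rmult_1_l.
        apply Rinv_le_contravar. apply Rmult_lt_0_compat; lra. lra. }
      assert (Hd : (harm k + 1 / INR (S k)) / r = harm k / r + 1 / INR (S k) / r) by (field; lra). rewrite Hd. lra.
    + intros x Hx Hxm. pose proof (Hxm M HM). lra.
Qed.

Lemma harm_sep (w : nat -> R) r l : 0 < r -> NoDup l ->
  (forall x, In x l -> r <= w x) ->
  (forall x y, In x l -> In y l -> x <> y -> r <= Rabs (w x - w y)) ->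
  lsum l (fun x => 1 / w x) <= harm (length l) / r.
Proof. intros. apply (harm_sep_aux w r H (length l) l eq_refl); auto. Qed.

Lemma jordan u : 0 <= u -> u <= 1/2 -> 9/5 * u <= sin (PI * u).
Proof.
  intros H0 H1. pose proof PI_lb. pose proof PI_ub.
  pose proof (sin_ge_cubic (PI * u) ltac:(nra) ltac:(nra)).
  assert (PI * u - PI * u * (PI * u) * (PI * u) / 6 = u * (PI - PI*PI*PI*(u*u)/6)) by field.
  assert (PI*PI*PI*(u*u) <= PI*PI*PI/4).
  { assert (u*u <= 1/4) by (pose proof (Rmult_le_compat u (1/2) u (1/2) H0 H0 H1 H1); lra). assert (0 < PI*PI*PI) by (pose proof PI_RGT_0; apply Rmult_lt_0_compat; [apply Rmult_lt_0_compat|]; lra).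
    replace (PI*PI*PI/4) with (PI*PI*PI*(1/4)) by field. apply Rmult_le_compat_l; lra. }
  assert (PI - PI*PI*PI/24 >= 9/5).
  { assert (PI*PI <= 3.25*3.25) by nra. assert (PI*PI*PI <= 3.25*3.25*3.25) by nra. nra. }
  nra.
Qed.

Lemma sin_min y : 0 < y < 1 -> 9/5 * Rmin y (1 - y) <= sin (PI * y).
Proof.
  intros [H0 H1]. unfold Rmin. destruct (Rle_dec y (1 - y)).
  - apply jordan; lra.
  - replace (PI * y) with (PI - PI * (1 - y)) by ring. rewrite sin_PI_x. apply jordan; lra.
Qed.

Lemma Rabs_sin_le x : Rabs (sin x) <= Rabs x.
Proof.
  destruct (Rle_dec 0 x).
  - rewrite (Rabs_right x) by lra. pose proof (sin_le_x x r).
    destruct (Rle_dec x PI).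
    + rewrite Rabs_right. auto. apply Rle_ge, sin_ge_0; lra.
    + pose proof (SIN_bound x). pose proof PI_lb. apply Rabs_le. lra.
  - rewrite (Rabs_left x) by lra. rewrite <- Rabs_Ropp, <- sin_neg.
    pose proof (sin_le_x (-x) ltac:(lra)).
    destruct (Rle_dec (-x) PI).
    + rewrite Rabs_right. auto. apply Rle_ge, sin_ge_0; lra.
    + pose proof (SIN_bound (-x)). pose proof PI_lb. apply Rabs_le. lra.
Qed.

Lemma G_upper n y : 0 < y < 1 -> Cmod (G n y) * sin (PI * y) <= 1.
Proof.
  intros Hy. pose proof (G_mod n y) as H.
  assert (0 < sin (PI * y)) by (apply sin_gt_0; pose proof PI_RGT_0; nra).
  rewrite Rabs_right in H by lra. rewrite H.
  pose proof (SIN_bound (PI * y * INR n)). apply Rabs_le. lra.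
Qed.

Lemma Rabs_sin_small x : Rabs x <= PI -> Rabs (sin x) = sin (Rabs x).
Proof.
  intros H. destruct (Rle_dec 0 x) as [Hx|Hx].
  - rewrite (Rabs_right x) in * by lra. apply Rabs_right, Rle_ge, sin_ge_0; lra.
  - rewrite (Rabs_left x) in * by lra. rewrite sin_neg. apply Rabs_left1.
    assert (0 <= sin (- x)) by (apply sin_ge_0; lra). rewrite sin_neg in H0. lra.
Qed.

Lemma G_lower n d : Rabs (INR n * d) <= 1/2 ->
  INR n * (1 - PI * PI * (INR n * d) * (INR n * d) / 6) <= Cmod (G n d).
Proof.
  intros Hd. pose proof PI_lb as HP1. pose proof PI_ub as HP2. pose proof (pos_INR n) as Hn.
  destruct (Req_dec d 0) as [->|Hne].
  - rewrite G_zero, Cmod_R, Rabs_right by lra. nra.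
  - pose proof (G_mod n d) as HG.
    pose proof (Rabs_sin_le (PI * d)) as Hs1.
    set (A := Rabs (INR n * d)).
    assert (HA0 : 0 <= A) by apply Rabs_pos.
    assert (Ha : Rabs (PI * d * INR n) = PI * A).
    { unfold A. rewrite !Rabs_mult. rewrite (Rabs_right PI) by lra.
      rewrite (Rabs_right (INR n)) by lra. ring. }
    assert (HdA : A <= 1/2) by exact Hd. assert (HPA : PI * A <= PI * (1/2)) by (apply Rmult_le_compat_l; lra).
    assert (Hle : Rabs (PI * d * INR n) <= PI) by (rewrite Ha; lra).
    rewrite (Rabs_sin_small _ Hle) in HG.
    rewrite Ha in HG.
    assert (Hc : PI * A - (PI * A) * (PI * A) * (PI * A) / 6 <= sin (PI * A)).
    { apply sin_ge_cubic. apply Rmult_le_pos; lra. lra. }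
    set (B := Rabs (PI * d)).
    assert (HB : 0 < B).
    { unfold B. rewrite Rabs_mult, (Rabs_right PI) by lra. pose proof (Rabs_pos_lt d Hne). nra. }
    assert (HAB : PI * A = B * INR n).
    { unfold A, B. rewrite !Rabs_mult. rewrite (Rabs_right PI) by lra. rewrite (Rabs_right (INR n)) by lra. ring. }
    assert (Hsq : (INR n * d) * (INR n * d) = A * A).
    { unfold A. rewrite <- Rabs_mult. rewrite Rabs_right. auto. apply Rle_ge. nra. }
    replace (PI * PI * (INR n * d) * (INR n * d)) with (PI * PI * (A * A)) by (rewrite <- Hsq; ring).
    assert (HCm : 0 <= Cmod (G n d)) by apply Cmod_ge_0.
    assert (Cmod (G n d) * B >= PI * A - (PI * A) * (PI * A) * (PI * A) / 6).
    { assert (Cmod (G n d) * Rabs (sin (PI * d)) <= Cmod (G n d) * Rabs (PI * d)) by (apply Rmult_le_compat_l; auto). unfold B. lra. }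
    apply Rmult_le_reg_r with B; auto.
    replace (INR n * (1 - PI * PI * (A * A) / 6) * B) with (B * INR n - (PI * A) * (PI * A) * (B * INR n) / 6) by field.
    rewrite <- HAB. lra.
Qed.

Definition ee (a g : nat) : nat := if Nat.leb a g then 0%nat else 1%nat.
Definition rho (n a g : nat) : nat := if Nat.leb a g then (g - a)%nat else (g + n - a)%nat.
Definition vv (n a g : nat) : nat := Nat.min (rho n a g) (n - rho n a g).

Lemma rho_lt n a g : (a < n)%nat -> (g < n)%nat -> (rho n a g < n)%nat.
Proof. unfold rho. destruct (Nat.leb_spec a g); lia. Qed.

Lemma rho_pos n a g : (a < n)%nat -> (g < n)%nat -> g <> a -> (1 <= rho n a g)%nat.
Proof. unfold rho. destruct (Nat.leb_spec a g); lia. Qed.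

Lemma rho_inj n a g g' : (a < n)%nat -> (g < n)%nat -> (g' < n)%nat -> rho n a g = rho n a g' -> g = g'.
Proof. unfold rho. destruct (Nat.leb_spec a g), (Nat.leb_spec a g'); lia. Qed.

Lemma rho_real n a g : (a < n)%nat -> (g < n)%nat ->
  INR g = INR a + INR (rho n a g) - INR n * INR (ee a g).
Proof.
  intros. unfold rho, ee. destruct (Nat.leb_spec a g).
  - rewrite minus_INR by lia. simpl. ring.
  - rewrite minus_INR by lia. rewrite plus_INR. simpl. ring.
Qed.

Lemma vv_props n a g : (a < n)%nat -> (g < n)%nat ->
  INR (vv n a g) <= INR (rho n a g) /\ INR (vv n a g) <= INR n - INR (rho n a g) /\
  (INR (vv n a g) = INR (rho n a g) \/ INR (vv n a g) = INR n - INR (rho n a g)).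
Proof.
  intros. pose proof (rho_lt n a g H H0). unfold vv.
  rewrite <- minus_INR by lia.
  destruct (Nat.min_spec (rho n a g) (n - rho n a g)) as [[H2 H3]|[H2 H3]]; rewrite H3;
  repeat split; try (apply le_INR; lia); auto.
Qed.

Lemma IZR_abs_ge1 z : z <> 0%Z -> 1 <= Rabs (IZR z).
Proof.
  intros H. destruct (Z_lt_le_dec 0 z).
  - rewrite Rabs_right. apply IZR_le. lia. apply Rle_ge, IZR_le. lia.
  - rewrite Rabs_left1. replace 1 with (- IZR (-1)) by (simpl; ring). apply Ropp_le_contravar, IZR_le. lia.
    apply IZR_le. lia.
Qed.

Lemma absk_exists n x : (1 <= n)%nat -> Rabs x < INR n -> exists d, absk n x d.
Proof.
  intros Hn Hx. exists (Rmin (Rabs x) (INR n - Rabs x)). split.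
  - unfold Rmin. destruct (Rle_dec (Rabs x) (INR n - Rabs x)).
    + exists 0%Z. f_equal. simpl. ring.
    + destruct (Rle_dec 0 x).
      * exists 1%Z. rewrite (Rabs_right x) in * by lra. rewrite Rabs_left1 by (simpl; lra). simpl. ring.
      * exists (-1)%Z. rewrite (Rabs_left x) in * by lra. rewrite Rabs_right by (simpl; lra). simpl. ring.
  - intros z. destruct (Z.eq_dec z 0) as [->|Hz].
    + simpl. replace (x - INR n * 0) with x by ring. apply Rmin_l.
    + eapply Rle_trans. apply Rmin_r.
      pose proof (IZR_abs_ge1 z Hz).
      pose proof (Rabs_triang_inv (INR n * IZR z) x).
      rewrite Rabs_mult, (Rabs_right (INR n)) in H0 by (apply Rle_ge, pos_INR).
      rewrite <- (Rabs_Ropp (x - _)). replace (- (x - INR n * IZR z)) with (INR n * IZR z - x) by ring.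
      pose proof (pos_INR n). assert (INR n * 1 <= INR n * Rabs (IZR z)) by (apply Rmult_le_compat_l; lra). lra.
Qed.

Lemma absk_le n x d z : absk n x d -> d <= Rabs (x - INR n * IZR z).
Proof. intros [_ H]. apply H. Qed.

Lemma sep_rho n a r (Gamma : list nat) :
  (a < n)%nat ->
  (forall g, In g Gamma -> (g < n)%nat) ->
  (forall g g', In g Gamma -> In g' Gamma -> g <> g' ->
     forall d, absk n (INR g - INR g') d -> r < d) ->
  forall g g', In g Gamma -> In g' Gamma -> g <> g' ->
    r < Rabs (INR (rho n a g) - INR (rho n a g')).
Proof.
  intros Ha Hsub Hsep g g' Hg Hg' Hne.
  pose proof (Hsub g Hg). pose proof (Hsub g' Hg').
  assert (Hx : Rabs (INR g - INR g') < INR n).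
  { apply Rabs_def1; pose proof (lt_INR _ _ H); pose proof (lt_INR _ _ H0);
    pose proof (pos_INR g); pose proof (pos_INR g'); lra. }
  destruct (absk_exists n _ ltac:(lia) Hx) as [d Hd].
  pose proof (Hsep g g' Hg Hg' Hne d Hd).
  pose proof (absk_le _ _ _ (Z.of_nat (ee a g') - Z.of_nat (ee a g))%Z Hd).
  rewrite minus_IZR, <- !INR_IZR_INZ in H2.
  rewrite (rho_real n a g), (rho_real n a g') in H2 by auto.
  replace (INR a + INR (rho n a g) - INR n * INR (ee a g) - (INR a + INR (rho n a g') - INR n * INR (ee a g')) -
      INR n * (INR (ee a g') - INR (ee a g))) with (INR (rho n a g) - INR (rho n a g')) in H2 by ring.
  lra.
Qed.

Lemma sep_vv n a r (Gamma : list nat) :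
  (a < n)%nat -> In a Gamma ->
  (forall g, In g Gamma -> (g < n)%nat) ->
  (forall g g', In g Gamma -> In g' Gamma -> g <> g' ->
     forall d, absk n (INR g - INR g') d -> r < d) ->
  forall g, In g Gamma -> g <> a -> r < INR (vv n a g).
Proof.
  intros Ha HaG Hsub Hsep g Hg Hne.
  pose proof (Hsub g Hg).
  assert (Hx : Rabs (INR g - INR a) < INR n).
  { apply Rabs_def1; pose proof (lt_INR _ _ H); pose proof (lt_INR _ _ Ha);
    pose proof (pos_INR g); pose proof (pos_INR a); lra. }
  destruct (absk_exists n _ ltac:(lia) Hx) as [d Hd].
  pose proof (Hsep g a Hg HaG Hne d Hd).
  pose proof (absk_le _ _ _ (- Z.of_nat (ee a g))%Z Hd) as H1.
  pose proof (absk_le _ _ _ (1 - Z.of_nat (ee a g))%Z Hd) as H2.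
  rewrite opp_IZR, <- !INR_IZR_INZ in H1.
  rewrite minus_IZR, <- !INR_IZR_INZ in H2.
  rewrite (rho_real n a g) in H1, H2 by auto.
  replace (INR a + INR (rho n a g) - INR n * INR (ee a g) - INR a - INR n * - INR (ee a g)) with (INR (rho n a g)) in H1 by ring.
  replace (INR a + INR (rho n a g) - INR n * INR (ee a g) - INR a - INR n * (1 - INR (ee a g))) with (- (INR n - INR (rho n a g))) in H2 by ring.
  rewrite Rabs_Ropp in H2.
  pose proof (rho_lt n a g Ha H). pose proof (lt_INR _ _ H3).
  rewrite Rabs_right in H1 by (apply Rle_ge, pos_INR).
  rewrite Rabs_right in H2 by lra.
  destruct (vv_props n a g Ha H) as [_ [_ [E|E]]]; rewrite E; lra.
Qed.

Lemma rsum_S n g : rsum (S n) g = rsum n g + g n.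
Proof. reflexivity. Qed.

Lemma rsum_filter n (p : nat -> bool) h :
  rsum n (fun g => if p g then h g else 0) = lsum (filter p (seq 0 n)) h.
Proof.
  induction n; [reflexivity|]. rewrite rsum_S, seq_S, filter_app, lsum_app, IHn. simpl.
  destruct (p n); simpl; unfold lsum; simpl; ring.
Qed.

Lemma lsum_ext l g h : (forall x, In x l -> g x = h x) -> lsum l g = lsum l h.
Proof. induction l; simpl; intros H; auto. rewrite H by auto. rewrite IHl by auto. auto. Qed.

Lemma side_harm n a (Q : nat -> bool) r K :
  (a < n)%nat -> 0 < r ->
  (forall g, (g < n)%nat -> Q g = true -> r <= INR (vv n a g)) ->
  (forall g g', (g < n)%nat -> (g' < n)%nat -> Q g = true -> Q g' = true -> g <> g' ->
      r <= Rabs (INR (rho n a g) - INR (rho n a g'))) ->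
  (length (filter Q (seq 0 n)) <= K)%nat ->
  rsum n (fun g => if Q g then 1 / INR (vv n a g) else 0) <= 2 * harm K / r.
Proof.
  intros Ha Hr Hv Hs HK.
  rewrite rsum_filter. set (l := filter Q (seq 0 n)).
  assert (Hl : forall g, In g l -> (g < n)%nat /\ Q g = true).
  { intros g Hg. unfold l in Hg. apply filter_In in Hg. destruct Hg as [H1 H2]. apply in_seq in H1. split; auto; lia. }
  assert (Hnd : NoDup l) by (apply NoDup_filter, seq_NoDup).
  set (s := fun g => Nat.leb (rho n a g) (n - rho n a g)).
  rewrite (lsum_split s l).
  assert (Hrinv : 0 < / r) by (apply Rinv_0_lt_compat; auto).
  assert (P1 : lsum (filter s l) (fun g => 1 / INR (vv n a g)) <= harm K / r).
  { rewrite (lsum_ext _ _ (fun g => 1 / INR (rho n a g))).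
    2:{ intros g Hg. apply filter_In in Hg. destruct Hg as [Hg Hsg]. unfold s in Hsg. apply Nat.leb_le in Hsg.
        unfold vv. rewrite Nat.min_l by auto. auto. }
    eapply Rle_trans. apply (harm_sep (fun g => INR (rho n a g)) r _ Hr).
    - apply NoDup_filter; auto.
    - intros g Hg. apply filter_In in Hg. destruct Hg as [Hg Hsg]. unfold s in Hsg. apply Nat.leb_le in Hsg.
      destruct (Hl g Hg). pose proof (Hv g H H0). unfold vv in H1. rewrite Nat.min_l in H1 by auto. auto.
    - intros g g' Hg Hg' Hne. apply filter_In in Hg. apply filter_In in Hg'.
      destruct Hg as [Hg _], Hg' as [Hg' _]. destruct (Hl g Hg), (Hl g' Hg'). apply Hs; auto.
    - unfold Rdiv. apply Rmult_le_compat_r. lra. apply harm_mono.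
      pose proof (filter_length_le s l). unfold l in *. lia. }
  assert (P2 : lsum (filter (fun g => negb (s g)) l) (fun g => 1 / INR (vv n a g)) <= harm K / r).
  { rewrite (lsum_ext _ _ (fun g => 1 / INR (n - rho n a g))).
    2:{ intros g Hg. apply filter_In in Hg. destruct Hg as [Hg Hsg]. unfold s in Hsg.
        apply Bool.negb_true_iff, Nat.leb_gt in Hsg.
        unfold vv. rewrite Nat.min_r by lia. auto. }
    eapply Rle_trans. apply (harm_sep (fun g => INR (n - rho n a g)) r _ Hr).
    - apply NoDup_filter; auto.
    - intros g Hg. apply filter_In in Hg. destruct Hg as [Hg Hsg]. unfold s in Hsg.
      apply Bool.negb_true_iff, Nat.leb_gt in Hsg.
      destruct (Hl g Hg). pose proof (Hv g H H0). unfold vv in H1. rewrite Nat.min_r in H1 by lia. auto.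
    - intros g g' Hg Hg' Hne. apply filter_In in Hg. apply filter_In in Hg'.
      destruct Hg as [Hg _], Hg' as [Hg' _]. destruct (Hl g Hg), (Hl g' Hg').
      pose proof (rho_lt n a g Ha H). pose proof (rho_lt n a g' Ha H1).
      rewrite !minus_INR by lia. replace (INR n - INR (rho n a g) - (INR n - INR (rho n a g'))) with
        (- (INR (rho n a g) - INR (rho n a g'))) by ring. rewrite Rabs_Ropp. apply Hs; auto.
    - unfold Rdiv. apply Rmult_le_compat_r. lra. apply harm_mono.
      pose proof (filter_length_le (fun g => negb (s g)) l). unfold l in *. lia. }
  assert (2 * harm K / r = harm K / r + harm K / r) by (field; lra). lra.
Qed.

Lemma K_bound n m a g d0 : (1 <= n)%nat -> (n <= m)%nat -> (a < n)%nat -> (g < n)%nat -> g <> a ->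
  Rabs d0 <= 1 / (2 * INR m) ->
  Cmod (RtoC (/ INR m) * G n (INR (rho n a g) / INR n + d0))%C <= 1 / (9/5 * (INR (vv n a g) - 1/2)).
Proof.
  intros Hn Hnm Ha Hg Hne Hd.
  assert (Hn0 : 1 <= INR n) by (apply (le_INR 1); lia).
  assert (Hmn : INR n <= INR m) by (apply le_INR; lia).
  pose proof (rho_pos n a g Ha Hg Hne) as Hr1. pose proof (rho_lt n a g Ha Hg) as Hr2.
  apply le_INR in Hr1. apply lt_INR in Hr2. simpl in Hr1.
  assert (Hr3 : INR (rho n a g) <= INR n - 1).
  { pose proof (rho_lt n a g Ha Hg) as H. apply le_INR in H. rewrite S_INR in H. lra. }
  destruct (vv_props n a g Ha Hg) as [Hv1 [Hv2 Hv3]].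
  set (rr := INR (rho n a g)) in *. set (v := INR (vv n a g)) in *. set (N := INR n) in *. set (M := INR m) in *.
  assert (Hv : 1 <= v) by (destruct Hv3; lra).
  assert (HnD : Rabs (N * d0) <= 1/2).
  { rewrite Rabs_mult, Rabs_right by lra.
    apply Rle_trans with (N * (1 / (2 * M))). apply Rmult_le_compat_l; lra.
    unfold Rdiv. rewrite Rmult_1_l. apply Rmult_le_reg_r with (2 * M). lra.
    rewrite Rmult_assoc, Rinv_l by lra. lra. }
  apply Rabs_le_between in HnD.
  set (y := rr / N + d0).
  assert (Hy : N * y = rr + N * d0) by (unfold y; field; lra).
  assert (Hy0 : 0 < y < 1).
  { split; apply Rmult_lt_reg_l with N; lra. }
  assert (Hmin : (v - 1/2) / N <= Rmin y (1 - y)).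
  { apply Rmin_glb; apply Rmult_le_reg_l with N; try lra; unfold Rdiv;
    rewrite <- Rmult_assoc, (Rmult_comm N), Rmult_assoc, Rinv_r, Rmult_1_r by lra; lra. }
  pose proof (sin_min y Hy0) as Hs.
  pose proof (G_upper n y Hy0) as HG.
  assert (Hs0 : 0 < (v - 1/2) / N) by (apply Rdiv_lt_0_compat; lra).
  assert (HsP : 9/5 * ((v - 1/2) / N) <= sin (PI * y)) by lra.
  rewrite Cmod_mult, Cmod_R, Rabs_right by (apply Rle_ge, Rlt_le, Rinv_0_lt_compat; lra).
  pose proof (Cmod_ge_0 (G n y)) as HC.
  assert (HC2 : Cmod (G n y) * (9/5 * ((v - 1/2) / N)) <= 1).
  { eapply Rle_trans; [|apply HG]. apply Rmult_le_compat_l; lra. }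
  assert (HC3 : Cmod (G n y) <= N / (9/5 * (v - 1/2))).
  { replace (N / (9/5 * (v - 1/2))) with (1 / (9/5 * ((v - 1/2) / N))) by (field; lra).
    apply Rmult_le_reg_r with (9/5 * ((v - 1/2) / N)). lra.
    replace (1 / (9 / 5 * ((v - 1 / 2) / N)) * (9 / 5 * ((v - 1 / 2) / N))) with 1 by (field; lra). lra. }
  apply Rle_trans with (/ M * (N / (9/5 * (v - 1/2)))).
  apply Rmult_le_compat_l. apply Rlt_le, Rinv_0_lt_compat; lra. auto.
  replace (/ M * (N / (9/5 * (v - 1/2)))) with ((N / M) * (1 / (9/5 * (v - 1/2)))) by (field; lra).
  rewrite <- (Rmult_1_l (1 / (9 / 5 * (v - 1 / 2)))) at 2.
  apply Rmult_le_compat_r. apply Rlt_le, Rdiv_lt_0_compat; lra.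
  unfold Rdiv. apply Rmult_le_reg_r with M. lra. rewrite Rmult_assoc, Rinv_l; lra.
Qed.

Lemma d0_bound m n a : (1 <= n)%nat -> (n <= m)%nat ->
  Rabs (INR a / INR n - INR (Z.to_nat (Int_part (INR m / INR n * INR a + / 2))) / INR m) <= 1 / (2 * INR m).
Proof.
  intros Hn Hnm.
  assert (HN : 0 < INR n) by (apply lt_0_INR; lia).
  assert (HM : 0 < INR m) by (apply lt_0_INR; lia).
  set (X := INR m / INR n * INR a).
  assert (HX : 0 <= X) by (unfold X; pose proof (pos_INR a); apply Rmult_le_pos; [apply Rlt_le, Rdiv_lt_0_compat|]; lra).
  destruct (base_Int_part (X + / 2)) as [H1 H2].
  set (z := Int_part (X + / 2)) in *.
  assert (Hz : (0 <= z)%Z).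
  { assert (-1 < IZR z) by lra. apply lt_IZR in H. lia. }
  rewrite (INR_IZR_INZ (Z.to_nat z)), Z2Nat.id by auto.
  replace (INR a / INR n - IZR z / INR m) with ((X - IZR z) / INR m) by (unfold X; field; lra).
  unfold Rdiv. rewrite Rabs_mult, (Rabs_right (/ INR m)) by (apply Rle_ge, Rlt_le, Rinv_0_lt_compat; lra).
  rewrite Rinv_mult, <- Rmult_assoc. apply Rmult_le_compat_r. apply Rlt_le, Rinv_0_lt_compat; lra.
  apply Rabs_le. lra.
Qed.

Lemma main_term n m d0 : (1 <= n)%nat -> (n <= m)%nat -> (m <= 2 * n)%nat ->
  Rabs d0 <= 1 / (2 * INR m) -> 0.44 <= / INR m * Cmod (G n d0).
Proof.
  intros Hn Hnm Hm2 Hd.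
  assert (HN : 1 <= INR n) by (apply (le_INR 1); lia).
  assert (HNM : INR n <= INR m) by (apply le_INR; lia).
  assert (HM2 : INR m <= 2 * INR n) by (replace (2 * INR n) with (INR (2 * n)) by (rewrite mult_INR; simpl; ring); apply le_INR; lia).
  set (t := INR n / INR m).
  assert (Ht : 1/2 <= t <= 1).
  { unfold t. split; [apply Rmult_le_reg_r with (INR m)|apply Rmult_le_reg_r with (INR m)]; try lra;
    replace (INR n / INR m * INR m) with (INR n) by (field; lra); lra. }
  assert (Hnd : Rabs (INR n * d0) <= t / 2).
  { rewrite Rabs_mult, (Rabs_right (INR n)) by lra.
    replace (t / 2) with (INR n * (1 / (2 * INR m))) by (unfold t; field; lra).
    apply Rmult_le_compat_l; lra. }
  pose proof (G_lower n d0 ltac:(lra)) as HG.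
  assert (Hq : (INR n * d0) * (INR n * d0) <= t * t / 4).
  { replace ((INR n * d0) * (INR n * d0)) with (Rabs (INR n * d0) * Rabs (INR n * d0)) by (rewrite <- Rabs_mult; apply Rabs_right; apply Rle_ge; nra).
    pose proof (Rabs_pos (INR n * d0)).
    assert (Rabs (INR n * d0) * Rabs (INR n * d0) <= (t/2) * (t/2)) by (apply Rmult_le_compat; lra). lra. }
  pose proof PI_ub. pose proof PI_lb.
  assert (HP2 : PI * PI <= 10.5625) by nra.
  apply Rle_trans with (/ INR m * (INR n * (1 - PI * PI * (INR n * d0) * (INR n * d0) / 6))).
  2:{ apply Rmult_le_compat_l. apply Rlt_le, Rinv_0_lt_compat; lra. auto. }
  replace (/ INR m * (INR n * (1 - PI * PI * (INR n * d0) * (INR n * d0) / 6))) with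
    (t * (1 - PI * PI * ((INR n * d0) * (INR n * d0)) / 6)) by (unfold t; field; lra).
  set (q := (INR n * d0) * (INR n * d0)) in *.
  assert (Hq0 : 0 <= q) by (unfold q; nra).
  assert (PI * PI * q <= 10.5625 * (t * t / 4)).
  { apply Rle_trans with (10.5625 * q). apply Rmult_le_compat_r; lra. apply Rmult_le_compat_l; lra. }
  assert (Hc : 0 <= (t - 1/2) * (1 - t) * (t + 3/2)) by (apply Rmult_le_pos; [apply Rmult_le_pos|]; lra).
  nra.
Qed.

Lemma ln2_lt1 : ln 2 < 1.
Proof. rewrite <- (ln_exp 1). apply ln_increasing. lra. pose proof (exp_ineq1 1 ltac:(lra)). lra. Qed.

Lemma inv_le_helper p q c : 0 < p -> 0 < q -> q <= c * p -> 1 / p <= c * (1 / q).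
Proof.
  intros Hp Hq H. assert (c * (1 / q) - 1 / p = (c * p - q) * / (p * q)) by (field; lra).
  assert (0 <= (c * p - q) * / (p * q)).
  { apply Rmult_le_pos. lra. apply Rlt_le, Rinv_0_lt_compat, Rmult_lt_0_compat; lra. }
  lra.
Qed.

Theorem proposition5p3
  (m n : nat) (Hnm : (n <= m)%nat) (Hm2n : (m <= 2 * n)%nat)
  (L Cc tau : R) (HL : 0 < L) (HC : 1 < Cc)
  (Gamma : list nat) (HGnd : NoDup Gamma)
  (HGsub : forall a, In a Gamma -> (a < n)%nat)
  (Htau : tau < L / 20 * (1 / (3 + 2 * ln (INR n))))
  (f : nat -> C)
  (Hsep : forall a a', In a Gamma -> In a' Gamma -> a <> a' ->
     forall d, absk n (INR a - INR a') d ->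
       20 * Cc * (ln (INR (length Gamma) / 2) + 1) < d)
  (Hbig : forall a, In a Gamma ->
     L <= Cmod (fhat n f a) <= Cc * L)
  (Hsmall : forall a, (a < n)%nat -> ~ In a Gamma ->
     Cmod (fhat n f a) <= tau) :
  forall a, In a Gamma ->
    Cmod (fhat m (ftilde n m f) (round_mod m (INR m / INR n * INR a)))
      >= 1 / 5 * L.
Proof.
  intros a HaG.
  pose proof (HGsub a HaG) as Ha.
  assert (Hn1 : (1 <= n)%nat) by lia.
  assert (HN : 1 <= INR n) by (apply (le_INR 1); lia).
  assert (HM : 0 < INR m) by (apply lt_0_INR; lia).
  unfold round_mod.
  set (k := Z.to_nat (Int_part (INR m / INR n * INR a + / 2))).
  rewrite ghat_expand by lia.
  pose proof (d0_bound m n a Hn1 Hnm) as Hd0. fold k in Hd0.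
  set (d0 := INR a / INR n - INR k / INR m) in *.
  set (F := fhat n f).
  rewrite (csum_ext n _ (fun g => F g * (RtoC (/ INR m)%R * G n (INR (rho n a g) / INR n + d0))))%C.
  2:{ intros g Hg. f_equal. f_equal. rewrite <- (G_shift n (INR (rho n a g) / INR n + d0) (ee a g)). f_equal.
      rewrite (rho_real n a g) by auto. unfold d0. field. lra. }
  rewrite (csum_split n a) by auto.
  set (Y := csum n _).
  set (X := (F a * _)%C).
  assert (HXY : Cmod X - Cmod Y <= Cmod (X + Y)).
  { pose proof (Cmod_triangle (X + Y) (- Y)). rewrite Cmod_opp in H.
    replace (X + Y + - Y)%C with X in H by ring. lra. }
  assert (HX : 0.44 * L <= Cmod X).
  { unfold X. assert (Hr0 : rho n a a = 0%nat) by (unfold rho; rewrite Nat.leb_refl; lia).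
    rewrite Hr0. replace (INR 0 / INR n + d0) with d0 by (simpl; field; lra).
    rewrite !Cmod_mult, Cmod_R, Rabs_right by (apply Rle_ge, Rlt_le, Rinv_0_lt_compat; lra).
    pose proof (main_term n m d0 Hn1 Hnm Hm2n Hd0).
    destruct (Hbig a HaG). change (fhat n f a) with (F a) in *.
    rewrite <- Rmult_assoc. apply Rle_trans with (L * 0.44). lra.
    rewrite Rmult_assoc. apply Rmult_le_compat; lra. }
  set (N := length Gamma) in *.
  set (r' := 20 * Cc * (ln (INR N / 2) + 1)) in *.
  set (tp := Rmax tau 0).
  assert (Hln : 0 <= ln (INR n)).
  { destruct (Req_dec (INR n) 1) as [E|E]. rewrite E, ln_1. lra. rewrite <- ln_1. left. apply ln_increasing; lra. }
  assert (Htp0 : 0 <= tp) by apply Rmax_r.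
  assert (Htp : tp * (3 + 2 * ln (INR n)) <= L / 20).
  { assert (tp <= L / 20 * (1 / (3 + 2 * ln (INR n)))).
    { unfold tp. apply Rmax_lub. lra. apply Rmult_le_pos. lra. apply Rlt_le, Rdiv_lt_0_compat; lra. }
    apply Rmult_le_compat_r with (r := 3 + 2 * ln (INR n)) in H. 2: lra.
    replace (L / 20 * (1 / (3 + 2 * ln (INR n))) * (3 + 2 * ln (INR n))) with (L / 20) in H by (field; lra). lra. }
  set (Q1 := fun g => negb (Nat.eqb g a)).
  set (Q2 := fun g => andb (negb (Nat.eqb g a)) (if in_dec Nat.eq_dec g Gamma then true else false)).
  assert (HN2 : forall g, In g Gamma -> g <> a -> (2 <= N)%nat).
  { intros g Hg Hne. unfold N. change 2%nat with (length (g :: a :: nil)). apply NoDup_incl_length.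
    constructor. intros [E|[]]; auto. constructor. intros []. constructor.
    intros x [<-|[<-|[]]]; auto. }
  assert (Hr'20 : forall g, In g Gamma -> g <> a -> 20 <= r').
  { intros g Hg Hne. pose proof (HN2 g Hg Hne). apply le_INR in H. simpl in H.
    assert (0 <= ln (INR N / 2)).
    { destruct (Req_dec (INR N / 2) 1) as [E|E]. rewrite E, ln_1. lra. rewrite <- ln_1. left. apply ln_increasing; lra. }
    unfold r'. nra. }
  assert (HY : Cmod Y <= rsum n (fun g => tp * (10/9) * (if Q1 g then 1 / INR (vv n a g) else 0) +
                                        Cc * L * (50/81) * (if Q2 g then 1 / INR (vv n a g) else 0))).
  { unfold Y. eapply Rle_trans; [apply Cmod_csum|]. apply rsum_le. intros g Hg.
    unfold Q1, Q2. destruct (Nat.eqb_spec g a) as [->|Hne].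
    - simpl. rewrite Cmod_0. lra.
    - simpl. rewrite Cmod_mult.
      pose proof (K_bound n m a g d0 Hn1 Hnm Ha Hg Hne Hd0) as HK.
      destruct (vv_props n a g Ha Hg) as [Hv1 [Hv2 Hv3]].
      pose proof (rho_pos n a g Ha Hg Hne) as Hr1. apply le_INR in Hr1. simpl in Hr1.
      pose proof (rho_lt n a g Ha Hg) as Hr2. apply lt_INR in Hr2.
      assert (Hr3 : INR (rho n a g) <= INR n - 1).
      { pose proof (rho_lt n a g Ha Hg) as H. apply le_INR in H. rewrite S_INR in H. lra. }
      assert (Hv : 1 <= INR (vv n a g)) by (destruct Hv3; lra).
      pose proof (Cmod_ge_0 (fhat n f g)). pose proof (Cmod_ge_0 (RtoC (/ INR m)%R * G n (INR (rho n a g) / INR n + d0))%C).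
      change (F g) with (fhat n f g).
      destruct (in_dec Nat.eq_dec g Gamma) as [HgG|HgG].
      + destruct (Hbig g HgG) as [_ HFb].
        pose proof (Hr'20 g HgG Hne).
        pose proof (sep_vv n a r' Gamma Ha HaG HGsub Hsep g HgG Hne).
        assert (Hb : 1 / (9 / 5 * (INR (vv n a g) - 1 / 2)) <= 50/81 * (1 / INR (vv n a g))).
        { apply inv_le_helper; lra. }
        assert (0 <= tp * (10 / 9) * (1 / INR (vv n a g))) by (apply Rmult_le_pos; [lra|apply Rlt_le, Rdiv_lt_0_compat; lra]).
        simpl. eapply Rle_trans. apply Rmult_le_compat; [lra|lra|apply HFb|]. eapply Rle_trans. apply HK. apply Hb.
        nra.
      + pose proof (Hsmall g Hg HgG) as HFs.
        assert (HFt : Cmod (fhat n f g) <= tp) by (unfold tp; eapply Rle_trans; [apply HFs|apply Rmax_l]).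
        assert (Hb : 1 / (9 / 5 * (INR (vv n a g) - 1 / 2)) <= 10/9 * (1 / INR (vv n a g))).
        { apply inv_le_helper; lra. }
        simpl. rewrite Rmult_0_r, Rplus_0_r. eapply Rle_trans. apply Rmult_le_compat; [lra|lra|apply HFt|]. eapply Rle_trans. apply HK. apply Hb.
        lra. }
  rewrite rsum_plus in HY.
  rewrite (rsum_scal n (tp * (10/9)) (fun g => if Q1 g then 1 / INR (vv n a g) else 0)) in HY.
  rewrite (rsum_scal n (Cc * L * (50/81)) (fun g => if Q2 g then 1 / INR (vv n a g) else 0)) in HY.
  assert (HS1 : rsum n (fun g => if Q1 g then 1 / INR (vv n a g) else 0) <= 2 * (1 + ln (INR n))).
  { eapply Rle_trans. apply (side_harm n a Q1 1 n Ha ltac:(lra)).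
    - intros g Hg HQ. unfold Q1 in HQ. apply Bool.negb_true_iff, Nat.eqb_neq in HQ.
      destruct (vv_props n a g Ha Hg) as [Hv1 [Hv2 Hv3]].
      pose proof (rho_pos n a g Ha Hg HQ) as Hr1. apply le_INR in Hr1. simpl in Hr1.
      pose proof (rho_lt n a g Ha Hg) as H. apply le_INR in H. rewrite S_INR in H.
      destruct Hv3; lra.
    - intros g g' Hg Hg' _ _ Hne.
      assert (rho n a g <> rho n a g') by (intro E; apply Hne; apply (rho_inj n a); auto).
      destruct (Nat.lt_total (rho n a g) (rho n a g')) as [Hl|[Hl|Hl]]; [| lia |];
      apply le_INR in Hl; rewrite S_INR in Hl.
      + rewrite Rabs_left; lra.
      + rewrite Rabs_right; lra.
    - eapply Nat.le_trans. apply filter_length_le. rewrite length_seq. lia.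
    - pose proof (harm_ln n Hn1). lra. }
  assert (HS2 : rsum n (fun g => if Q2 g then 1 / INR (vv n a g) else 0) <= 1 / (5 * Cc)).
  { assert (Hlen : (length (filter Q2 (seq 0 n)) + 1 <= N)%nat).
    { unfold N. replace (length (filter Q2 (seq 0 n)) + 1)%nat with (length (a :: filter Q2 (seq 0 n))) by (simpl; lia).
      apply NoDup_incl_length.
      - constructor. intros Hin. apply filter_In in Hin. destruct Hin as [_ Hq]. unfold Q2 in Hq.
        rewrite Nat.eqb_refl in Hq. discriminate.
        apply NoDup_filter, seq_NoDup.
      - intros x [<-|Hx]; auto. apply filter_In in Hx. destruct Hx as [_ Hq]. unfold Q2 in Hq.
        destruct (in_dec Nat.eq_dec x Gamma); auto. rewrite Bool.andb_false_r in Hq. discriminate. }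
    assert (HC5 : 0 < 1 / (5 * Cc)) by (apply Rdiv_lt_0_compat; lra).
    destruct (Nat.le_gt_cases N 1) as [HN1|HN1].
    - assert (Hnil : filter Q2 (seq 0 n) = nil) by (destruct (filter Q2 (seq 0 n)); [auto|simpl in Hlen; lia]).
      rewrite rsum_filter, Hnil. simpl. lra.
    - assert (HNr : 2 <= INR N) by (apply (le_INR 2); lia).
      assert (Hy : 0 <= ln (INR N / 2)).
      { destruct (Req_dec (INR N / 2) 1) as [E|E]. rewrite E, ln_1. lra. rewrite <- ln_1. left. apply ln_increasing; lra. }
      assert (Hr' : 0 < r') by (unfold r'; nra).
      eapply Rle_trans. apply (side_harm n a Q2 r' (N - 1) Ha Hr').
      + intros g Hg HQ. unfold Q2 in HQ. apply Bool.andb_true_iff in HQ. destruct HQ as [HQ1 HQ2].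
        apply Bool.negb_true_iff, Nat.eqb_neq in HQ1. destruct (in_dec Nat.eq_dec g Gamma) as [HgG|]; [|discriminate].
        left. apply (sep_vv n a r' Gamma Ha HaG HGsub Hsep g HgG HQ1).
      + intros g g' Hg Hg' HQ HQ' Hne. unfold Q2 in HQ, HQ'.
        destruct (in_dec Nat.eq_dec g Gamma) as [HgG|]; [|rewrite Bool.andb_false_r in HQ; discriminate].
        destruct (in_dec Nat.eq_dec g' Gamma) as [HgG'|]; [|rewrite Bool.andb_false_r in HQ'; discriminate].
        left. apply (sep_rho n a r' Gamma Ha HGsub Hsep g g' HgG HgG' Hne).
      + lia.
      + pose proof (harm_ln (N - 1) ltac:(lia)) as Hh.
        rewrite minus_INR in Hh by lia. simpl in Hh.
        assert (ln (INR N - 1) <= ln (INR N)) by (left; apply ln_increasing; lra).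
        assert (ln (INR N) = ln 2 + ln (INR N / 2)).
        { rewrite <- ln_mult by lra. f_equal. field. }
        pose proof ln2_lt1.
        assert (Hh2 : 2 * harm (N - 1) <= 4 * (ln (INR N / 2) + 1)) by lra.
        apply Rle_trans with (4 * (ln (INR N / 2) + 1) / r').
        { unfold Rdiv. apply Rmult_le_compat_r. apply Rlt_le, Rinv_0_lt_compat; lra. lra. }
        unfold r'. right. field. split; lra. }
  assert (Hfin1 : tp * (10 / 9) * rsum n (fun g => if Q1 g then 1 / INR (vv n a g) else 0) <= 10/9 * (L / 20)).
  { apply Rle_trans with (tp * (10/9) * (2 * (1 + ln (INR n)))).
    apply Rmult_le_compat_l. lra. auto. nra. }
  assert (Hfin2 : Cc * L * (50 / 81) * rsum n (fun g => if Q2 g then 1 / INR (vv n a g) else 0) <= 10 / 81 * L).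
  { apply Rle_trans with (Cc * L * (50 / 81) * (1 / (5 * Cc))).
    apply Rmult_le_compat_l. apply Rmult_le_pos; [apply Rmult_le_pos|]; lra. auto.
    right. field. lra. }
  lra.
Qed.
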